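(* Let $X$ be a real Banach space with $\dim X\ge 2$ and let $\alpha,\beta>0$. Let $(f_n)$ be a sequence in $B_{X^*}$ and $(x_n)$ a sequence in $B_X$ such that $\lim_{n\to\infty}f_n(x_n)=1$. Then for any sequence $(g_n)$ in $B_{X^*}$ with $\liminf_{n\to\infty}g_n(x_n)>0$, $$DW(X,\alpha,\beta)\ge(\alpha+\beta)\max\left\{\liminf_{n\to\infty}\|g_n(x_n)f_n-g_n\|,\,1\right\}\ge(\alpha+\beta)\max\left\{\liminf_{n\to\infty}g_n(x_n)\|f_n-g_n\|,\,1\right\}.$$
   Context: $B_X$ and $B_{X^*}$ denote the closed unit balls of $X$ and of its dual $X^*$. For $\alpha,\beta>0$, $$DW(X,\alpha,\beta)=\sup\left\{\frac{\alpha\|x\|+\beta\|y\|}{\|x-y\|}\left\|\frac{x}{\|x\|}-\frac{y}{\|y\|}\right\|: x,y\in X\setminus\{0\},\ x\neq y\right\}.$$ *)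

(* Defs.v *)
From HB Require Import structures.
From mathcomp Require Import all_boot all_order all_algebra.
From mathcomp Require Import all_classical all_reals all_analysis.
Set Implicit Arguments. Unset Strict Implicit. Unset Printing Implicit Defensive.
Import Order.TTheory GRing.Theory Num.Theory.
Import numFieldNormedType.Exports.
Local Open Scope classical_set_scope.
Local Open Scope ring_scope.

Definition dim_ge2 (R : realType) (X : normedModType R) : Prop :=
  exists x y : X, forall a b : R, a *: x + b *: y = 0 -> a = 0 /\ b = 0.

(* f : X -> R is a linear functional of norm <= 1, i.e. f \in B_{X^*}
   (boundedness by the norm makes it continuous). *)
Definition in_dual_ball (R : realType) (X : normedModType R) (f : X -> R) : Prop :=
  (forall (a : R) (x y : X), f (a *: x + y) = a * f x + f y) /\
  (forall x : X, `|f x| <= `|x|).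

Definition in_ball (R : realType) (X : normedModType R) (x : X) : Prop :=
  `|x| <= 1.

Definition dual_norm (R : realType) (X : normedModType R) (f : X -> R) : R :=
  sup [set `|f x| | x in [set x : X | `|x| <= 1]].

(* DW(X, alpha, beta), valued in the extended reals (the sup may be +oo) *)
Definition DW (R : realType) (X : normedModType R) (alpha beta : R) : \bar R :=
  ereal_sup [set r : \bar R | exists x y : X,
     [/\ x != 0, y != 0, x != y &
      r = ((alpha * `|x| + beta * `|y|) / `|x - y|
            * `| (`|x|^-1 *: x - `|y|^-1 *: y) |)%:E]].

(* Main.v *)
Require Import Defs.
From HB Require Import structures.
From mathcomp Require Import all_boot all_order all_algebra.
From mathcomp Require Import all_classical all_reals all_analysis.
From mathcomp Require Import ring lra.
Import Order.TTheory GRing.Theory Num.Theory.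
Import numFieldNormedType.Exports.
Local Open Scope classical_set_scope.
Local Open Scope ring_scope.
Set Implicit Arguments. Unset Strict Implicit.

Lemma db0 (R : realType) (X : normedModType R) (f : X -> R) :
  in_dual_ball f -> f 0 = 0.
Proof. by move=> [_ Hb]; have := Hb 0; rewrite normr0 normr_le0 => /eqP. Qed.

Lemma dbN (R : realType) (X : normedModType R) (f : X -> R) z :
  in_dual_ball f -> f (- z) = - f z.
Proof.
move=> H; have := H.1 (-1) z 0.
by rewrite addr0 scaleN1r (db0 H) addr0 mulN1r.
Qed.

Lemma dbD (R : realType) (X : normedModType R) (f : X -> R) z y :
  in_dual_ball f -> f (z + y) = f z + f y.
Proof. by move=> H; have := H.1 1 z y; rewrite scale1r mul1r. Qed.

Lemma dbZ (R : realType) (X : normedModType R) (f : X -> R) a z :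
  in_dual_ball f -> f (a *: z) = a * f z.
Proof. by move=> H; have := H.1 a z 0; rewrite addr0 (db0 H) addr0. Qed.

Lemma dbB (R : realType) (X : normedModType R) (f : X -> R) z y :
  in_dual_ball f -> f (z - y) = f z - f y.
Proof. by move=> H; rewrite dbD // dbN. Qed.

Lemma dble (R : realType) (X : normedModType R) (f : X -> R) z :
  in_dual_ball f -> f z <= `|z|.
Proof. by move=> H; apply: le_trans (ler_norm _) (H.2 z). Qed.

Lemma dbge (R : realType) (X : normedModType R) (f : X -> R) z :
  in_dual_ball f -> - `|z| <= f z.
Proof. by move=> H; rewrite lerNl -dbN // -normrN; apply: dble. Qed.

Lemma dn_ne0 (R : realType) (X : normedModType R) (h : X -> R) :
  [set `|h x| | x in [set x : X | `|x| <= 1]] !=set0.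
Proof. by exists `|h 0|; exists 0 => //=; rewrite normr0. Qed.

Lemma dn_ub (R : realType) (X : normedModType R) (h : X -> R) K z :
  (forall z : X, `|z| <= 1 -> `|h z| <= K) -> `|z| <= 1 -> `|h z| <= dual_norm h.
Proof.
move=> HK zb; apply: ub_le_sup; last by exists z.
by exists K => _ [w wb <-]; apply: HK.
Qed.

Lemma dn_le (R : realType) (X : normedModType R) (h : X -> R) M :
  (forall z : X, `|z| <= 1 -> `|h z| <= M) -> dual_norm h <= M.
Proof. by move=> HM; apply: ge_sup; [apply: dn_ne0|move=> _ [w wb <-]; apply: HM]. Qed.

Lemma dn_gt (R : realType) (X : normedModType R) (h : X -> R) r :
  r < dual_norm h -> exists z : X, `|z| <= 1 /\ r < `|h z|.
Proof. by move=> /(sup_gt (dn_ne0 h))[_ [w wb <-] H]; exists w. Qed.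

Lemma einf_gt (R : realType) (u : (\bar R)^nat) (r : R) :
  (r%:E < limn_einf u)%E -> exists N, forall n, (N <= n)%N -> (r%:E < u n)%E.
Proof.
rewrite limn_einf_lim (cvg_lim _ (@cvg_einfs_sup R u)) //.
move=> /ereal_sup_gt[_ [N _ <-]] H; exists N => n Nn.
apply: (lt_le_trans H); apply: ereal_inf_lbound; by exists n.
Qed.

Lemma einf_ge (R : realType) (u : (\bar R)^nat) (r : R) N :
  (forall n, (N <= n)%N -> (r%:E <= u n)%E) -> (r%:E <= limn_einf u)%E.
Proof.
move=> H; rewrite limn_einf_lim (cvg_lim _ (@cvg_einfs_sup R u)) //.
apply: le_trans (ereal_sup_ubound _); last by exists N.
by apply/ereal_infP => _ [n Nn <-]; apply: H.
Qed.

Lemma le_from_fin (R : realType) (a b : \bar R) :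
  (forall r : R, (r%:E < a)%E -> (r%:E <= b)%E) -> (a <= b)%E.
Proof.
move=> H; rewrite leNgt; apply/negP => ba.
case: b ba H => [b| |] ba H.
- case: a ba H => [a| |] ba H.
  + have := H ((a + b) / 2); rewrite !lte_fin !lee_fin in ba *. lra.
  + by have := H (b + 1); rewrite lee_fin ltry => /(_ isT); lra.
  + by [].
- by move: ba; rewrite ltNge leey.
- case: a ba H => [a| |] ba H.
  + by have := H (a - 1); rewrite lte_fin => /(_ ltac:(lra)).
  + by have := H 0; rewrite ltry => /(_ isT).
  + by [].
Qed.

Lemma divle (R : realFieldType) (a b c d : R) :
  0 <= a -> a <= c -> 0 < d -> d <= b -> a / b <= c / d.
Proof.
move=> a0 ac d0 db; apply: ler_pM => //; first by rewrite invr_ge0; lra.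
by rewrite lef_pV2 ?posrE //; lra.
Qed.

Lemma arith1 (R : realFieldType) (al be nu nx nz N s D h m : R) :
  0 < al -> 0 < be -> 0 < nu -> 0 < nz -> nz <= 1 -> 0 < s -> 0 <= N ->
  s * (h - D) <= N * nu -> D < h -> 0 <= m -> m <= nx / nu ->
  (al + be * m) * (h - D) <= (al * nu + be * nx) / (s * nz) * N.
Proof.
move=> al0 be0 nu0 nz0 nz1 s0 N0 HP Dh m0 mt.
set t := nx / nu.
have -> : (al * nu + be * nx) / (s * nz) * N = (al + be * t) * (N * nu) / (s * nz).
  rewrite /t; field; rewrite ?gt_eqF //; apply/andP; split; rewrite gt_eqF //.
have t0 : 0 <= t by exact: le_trans m0 mt.
have P0 : 0 <= N * nu by apply: mulr_ge0 => //; lra.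
have H1 : (al + be * t) * (N * nu) / s <= (al + be * t) * (N * nu) / (s * nz).
  apply: divle => //; first by apply: mulr_ge0 => //; nra.
  by rewrite mulr_gt0. by nra.
apply: le_trans H1.
rewrite ler_pdivlMr //.
have H2 : (al + be * m) <= (al + be * t) by rewrite lerD2l ler_pM2l.
have H3 : 0 <= al + be * m by nra.
have := mulr_ge0 H3 (_ : 0 <= N * nu - s * (h - D)) => /(_ ltac:(lra)) H4.
have := mulr_ge0 (_ : 0 <= al + be * t - (al + be * m)) P0 => /(_ ltac:(lra)) H5.
nra.
Qed.

Lemma arith2 (R : realFieldType) (al be q q' h : R) :
  0 < al -> 0 < be -> 1 <= q -> q < q' -> q' < h ->
  let s := (q' - q) / (4 * q') in let D := (q' - q) / (4 * (1 + q')) in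
  [/\ 0 < s, s <= 1/4, 0 <= D, s * D <= 1/4 & D < h] /\
   ((al + be) * q <= (al + be * ((1 - s * D) / (1 + s))) * (h - D)).
Proof.
move=> a0 b0 q1 qq qh s D.
have Es : s * (4 * q') = q' - q by rewrite /s; field; lra.
have ED : D * (4 * (1 + q')) = q' - q by rewrite /D; field; lra.
have s0 : 0 < s by rewrite /s divr_gt0 //; lra.
have D0 : 0 < D by rewrite /D divr_gt0 //; lra.
have s4 : s <= 1/4 by nra.
have D4 : 4 * D <= q' - q by nra.
have Dq : 4 * (D * q') <= q' - q by nra.
have sq : 4 * (s * q) <= q' - q by nra.
have sD : s * D <= 1/4 by nra.
have K1 : (1 + s) * q <= (1 - s * D) * (q' - D).
  have : s * D * (q' - D) <= D * q' by nra.
  nra.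
set m := (1 - s * D) / (1 + s).
have Em : m * (1 + s) = 1 - s * D by rewrite /m; field; lra.
have m0 : 0 <= m by rewrite /m divr_ge0; nra.
have m1 : m <= 1 by nra.
have K2 : q <= m * (q' - D) by nra.
split; first by split => //; lra.
have K3 : (al + be) * m <= al + be * m by nra.
have hD : 0 <= h - D by lra.
have := ler_wpM2r hD K3.
have : (al + be) * q <= (al + be) * (m * (h - D)).
  rewrite ler_pM2l; last by lra.
  by apply: le_trans K2 _; rewrite ler_wpM2l //; lra.
rewrite mulrA; lra.
Qed.

Lemma DW_pair (R : realType) (X : normedModType R) (alpha beta : R) (x y : X) :
  x != 0 -> y != 0 -> x != y ->
  (((alpha * `|x| + beta * `|y|) / `|x - y|
            * `| (`|x|^-1 *: x - `|y|^-1 *: y) |)%:E <= DW X alpha beta)%E.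
Proof. by move=> *; apply: ereal_sup_ubound; exists x, y; split. Qed.

Lemma DW_geA (R : realType) (X : normedModType R) (alpha beta : R) :
  dim_ge2 X -> ((alpha + beta)%:E <= DW X alpha beta)%E.
Proof.
move=> [v [w H]].
have v0 : v != 0.
  apply/eqP => v0; have := H 1 0; rewrite v0 scaler0 scale0r addr0 => /(_ erefl) [].
  by move/eqP; rewrite oner_eq0.
have nv : 0 < `|v| by rewrite normr_gt0.
have vv : v != - v.
  apply/eqP => vv; have : v + v = 0 by rewrite {2}vv subrr.
  move/eqP; rewrite -mulr2n -scaler_nat scaler_eq0 pnatr_eq0 /=.
  by apply/negP.
apply: le_trans (DW_pair alpha beta (y:= -v) v0 _ vv); last by rewrite oppr_eq0.
rewrite lee_fin normrN. idtac.
rewrite !opprK scalerN opprK -!mulr2n !normrMn normrZ ger0_norm ?invr_ge0 // mulVf ?gt_eqF //.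
rewrite le_eqVlt; apply/orP; left; apply/eqP.
rewrite -mulrDl -mulr_natr invfM !mulrA mulfK ?gt_eqF // mulfVK // pnatr_eq0.


Qed.

Lemma core (R : realType) (X : normedModType R) (alpha beta : R) (F G : X -> R)
  (x z : X) (s D : R) :
  in_dual_ball F -> in_dual_ball G -> `|x| <= 1 -> `|z| <= 1 -> 0 < G x ->
  1 - s * D <= F x -> 0 < alpha -> 0 < beta -> 0 < s -> s <= 1/4 -> 0 <= D ->
  s * D <= 1/4 -> D < G x * F z - G z ->
  (((alpha + beta * ((1 - s * D) / (1 + s))) * (G x * F z - G z - D))%:E
     <= DW X alpha beta)%E.
Proof.
move=> hF hG x1 z1 c0 Fx a0 b0 s0 s4 D0 sD Dh.
set c := G x in c0 Fx Dh *.
set h := c * F z - G z in Dh *.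
have Fxle := dble x hF.
have z0 : z != 0.
  apply/eqP => z0; move: Dh; rewrite /h z0 (db0 hF) (db0 hG); lra.
have nz : 0 < `|z| by rewrite normr_gt0.
set u := x + s *: z.
have Fu : F u = F x + s * F z by rewrite dbD // dbZ.
have Gu : G u = c + s * G z by rewrite dbD // dbZ.
have Fzge := dbge z hF.
have Fule := dble u hF.
have nu0 : 0 < `|u| by nra.
have nule : `|u| <= `|x| + s * `|z|.
  by apply: le_trans (ler_normD _ _) _; rewrite normrZ gtr0_norm.
have ux : u - x = s *: z by rewrite /u addrAC subrr add0r.
have u0 : u != 0 by rewrite -normr_gt0.
have x0 : x != 0 by rewrite -normr_gt0; lra.
have uxne : u != x by rewrite -subr_eq0 ux scaler_eq0 negb_or gt_eqF.
apply: le_trans (DW_pair alpha beta u0 x0 uxne).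
rewrite lee_fin ux normrZ gtr0_norm //.
set N := `| `|u|^-1 *: u - `|x|^-1 *: x|.
have NG : `|x|^-1 * c - `|u|^-1 * (c + s * G z) <= N.
  rewrite /N distrC -Gu /c -!dbZ // -dbB //; exact: dble.
have ix : 1 <= `|x|^-1 by rewrite invf_ge1; lra.
have c1 : c <= 1 by have := dble x hG; rewrite -/c; lra.
have HP : s * (h - D) <= N * `|u|.
  have E1 : (`|x|^-1 * c - `|u|^-1 * (c + s * G z)) * `|u|
          = `|x|^-1 * c * `|u| - (c + s * G z).
    by field; rewrite !normr_eq0 x0 u0.
  have H1 := ler_pM2r nu0; have : (`|x|^-1 * c - `|u|^-1 * (c + s * G z)) * `|u| <= N * `|u|.
    by rewrite ler_pM2r.
  rewrite E1 => H2.
  have H3 : c * `|u| <= `|x|^-1 * c * `|u| by have := mulr_ge0 (ltW c0) (ltW nu0); nra.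
  have H4 : c * (1 - F x) <= s * D by nra.
  rewrite /h; nra.
apply: arith1 => //.
all: try (by rewrite /N).
- apply: divr_ge0; lra.
- apply: divle; nra.
Qed.

Lemma hbound (R : realType) (X : normedModType R) (F G : X -> R) (c : R) z :
  in_dual_ball F -> in_dual_ball G -> `|c| <= 1 -> `|z| <= 1 ->
  `|c * F z - G z| <= 2.
Proof.
move=> hF hG c1 z1; apply: le_trans (ler_normB _ _) _.
rewrite normrM; have := hF.2 z; have := hG.2 z.
have := normr_ge0 (F z); nra.
Qed.

Lemma pw (R : realType) (X : normedModType R) (F G : X -> R) (x : X) :
  in_dual_ball F -> in_dual_ball G -> `|x| <= 1 -> 0 < G x ->
  G x * dual_norm (fun z => F z - G z)
    <= Order.max (dual_norm (fun z => G x * F z - G z)) 1.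
Proof.
move=> hF hG x1 c0.
set c := G x in c0 *.
set M := Order.max _ _.
have c1 : c <= 1 by have := dble x hG; rewrite -/c; lra.
have M1 : 1 <= M by rewrite /M le_max lexx orbT.
have Mh : dual_norm (fun z => c * F z - G z) <= M by rewrite /M le_max lexx.
have key : forall w : X, `|w| <= 1 -> c * (F w - G w) <= M.
  move=> w w1.
  have hw : `|c * F w - G w| <= dual_norm (fun z => c * F z - G z).
    apply: (@dn_ub _ _ (fun z => c * F z - G z) 2) => // z z1.
    by apply: hbound => //; rewrite ger0_norm; lra.
  have := ler_norm (c * F w - G w).
  have := dble w hF.
  case: (lerP 0 (G w)) => Gw; nra.
rewrite mulrC -ler_pdivlMr //.
apply: dn_le => z z1.
rewrite ler_pdivlMr // mulrC.
have := key (- z); rewrite normrN => /(_ z1); rewrite (dbN z hF) (dbN z hG) => k1.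
have := key z z1 => k2.
case: (lerP 0 (F z - G z)) => hs; [rewrite ger0_norm //|rewrite ltr0_norm //]; lra.
Qed.

Unset Implicit Arguments. Set Strict Implicit.

Theorem lemma1 (R : realType) (X : completeNormedModType R)
  (alpha beta : R) (f g : nat -> X -> R) (x : nat -> X) :
  dim_ge2 X -> 0 < alpha -> 0 < beta ->
  (forall n, in_dual_ball (f n)) -> (forall n, in_ball (x n)) ->
  (fun n => f n (x n)) @ \oo --> (1 : R) ->
  (forall n, in_dual_ball (g n)) ->
  (0 < limn_einf (fun n => (g n (x n))%:E))%E ->
  ((DW X alpha beta >=
      (alpha + beta)%:E *
        Order.max (limn_einf (fun n =>
           (dual_norm (fun z => g n (x n) * f n z - g n z))%:E)) 1%:E) /\
   ((alpha + beta)%:E *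
        Order.max (limn_einf (fun n =>
           (dual_norm (fun z => g n (x n) * f n z - g n z))%:E)) 1 >=
    (alpha + beta)%:E *
        Order.max (limn_einf (fun n =>
           (g n (x n) * dual_norm (fun z => f n z - g n z))%:E)) 1%:E))%E.
Proof.
move=> dim2 a0 b0 hf hx fx1 hg ginf.
set L := limn_einf (fun n => (dual_norm (fun z => g n (x n) * f n z - g n z))%:E).
set L' := limn_einf (fun n => (g n (x n) * dual_norm (fun z => f n z - g n z))%:E).
have A0 : 0 < alpha + beta by lra.
have [N3 HN3] := einf_gt ginf.
split.
- apply: le_from_fin => r Hr.
  have DWA := DW_geA alpha beta dim2.
  case: (ltrP r (alpha + beta)) => rA.
    by apply: le_trans DWA; rewrite lee_fin; lra.
  set q := r / (alpha + beta).
  have q1 : 1 <= q by rewrite /q ler_pdivlMr // mul1r.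
  have Erq : (alpha + beta) * q = r by rewrite /q; field; lra.
  have HqL : (q%:E < L)%E.
    move: Hr; rewrite -(@lte_pdivrMl _ (alpha + beta)) //.
    have -> : (((alpha + beta)^-1)%:E * r%:E)%E = q%:E by rewrite -EFinM /q mulrC.
    rewrite lt_max => /orP[//|].
    by rewrite lte_fin ltNge q1.
  have [q' [qq' q'L]] : exists q', q < q' /\ (q'%:E < L)%E.
    clear Hr; case: L HqL => [l| |] //= Hl.
      by move: Hl; rewrite !lte_fin => Hl; exists ((q + l) / 2); rewrite lte_fin; split; lra.
    by exists (q + 1); split; [lra|exact: ltry].
  have [N1 HN1] := einf_gt q'L.
  pose s := (q' - q) / (4 * q'); pose D := (q' - q) / (4 * (1 + q')).
  have sD0 : 0 < s * D.
    by rewrite mulr_gt0 // divr_gt0 //; lra.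
  move/cvgrPdist_lt: fx1 => /(_ (s * D) sD0) [N2 _ HN2].
  pose n := (N1 + N2 + N3)%N.
  have Fx : 1 - s * D <= f n (x n).
    have := HN2 n; rewrite /= => /(_ ltac:(by rewrite /n addnAC leq_addl)).
    move=> H; have := ler_norm (1 - f n (x n)); lra.
  have gx : 0 < g n (x n) by have := HN3 n; rewrite lte_fin => ->//; rewrite /n leq_addl.
  have := HN1 n; rewrite lte_fin => /(_ ltac:(by rewrite /n -addnA leq_addr)) /dn_gt [z [z1 Hz]].
  have [w [w1 Hw]] : exists w, `|w| <= 1 /\ q' < g n (x n) * f n w - g n w.
    case: (lerP 0 (g n (x n) * f n z - g n z)) => hs.
      by exists z; split => //; rewrite ger0_norm in Hz.
    exists (- z); rewrite normrN (dbN z (hf n)) (dbN z (hg n)); split => //.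
    by rewrite ltr0_norm in Hz; lra.
  have [[s0 s4 D0 sD Dh] Hfin] := @arith2 _ alpha beta q q' _ a0 b0 q1 qq' Hw.
  have := core (hf n) (hg n) (hx n) w1 gx Fx a0 b0 s0 s4 D0 sD Dh.
  apply: le_trans; rewrite lee_fin -Erq; exact: Hfin.
- apply: lee_wpmul2l; first by rewrite lee_fin; lra.
  apply: le_from_fin => r Hr.
  case: (ltrP r 1) => r1.
    by rewrite le_max; apply/orP; right; rewrite lee_fin; lra.
  have HrL' : (r%:E < L')%E.
    by move: Hr; rewrite lt_max => /orP[//|]; rewrite lte_fin ltNge r1.
  have [N1 HN1] := einf_gt HrL'.
  rewrite le_max; apply/orP; left.
  apply: (@einf_ge _ _ _ (N1 + N3)%N) => n Nn.
  have gx : 0 < g n (x n).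
    by have := HN3 n; rewrite lte_fin => ->//; apply: leq_trans Nn; rewrite leq_addl.
  have := HN1 n; rewrite lte_fin => /(_ ltac:(by apply: leq_trans Nn; rewrite leq_addr)) H1.
  have := pw (hf n) (hg n) (hx n) gx.
  move=> /(lt_le_trans H1); rewrite lt_max => /orP[H|H]; first by rewrite lee_fin ltW.
  by move: H; rewrite ltNge r1.
Qed.
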